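(* Let $E_1,E_2,E_3$ be pairwise disjoint (possibly empty) sets of edges on $\gamma_2$ with vertices in $[n]$. Suppose the edges of $E_1\cup E_2\cup E_3$ can be linearly ordered as $e_1,\dots,e_m$ such that: edges of $E_i$ come before edges of $E_j$ whenever $i<j$; for all $1\le i<j\le m$, either $e_i<_3e_j$ or $e_i$ and $e_j$ do not cross; and the edges of $E_2$ are pairwise non-crossing. Then there is a triangulation $T\in S(n,2)$ such that $e\le_3T$ for every $e\in E_1$, $e\in T$ for every $e\in E_2$, and $e\ge_3T$ (i.e. $T\le_3 e$) for every $e\in E_3$.
   Context: $\gamma_d=\{(t,t^2,\dots,t^d):t\in\mathbb{R}\}$. Fix $t_1<\dots<t_n$ and points $\gamma_2(t_i)$ identified with $i\in[n]$; $C(n,2)$ is their convex hull and $S(n,2)$ the set of triangulations of $C(n,2)$ with vertices in $[n]$. An edge is a 2-subset of $[n]$ identified with the segment it spans; two edges cross (overlap) if their segments meet outside their common vertices. For a simplex $\alpha\subseteq[n]$, $h_\alpha:\mathrm{conv}(\alpha)\to\mathbb{R}$ gives the last coordinate of the point of the convex hull of $\{\gamma_3(t_i):i\in\alpha\}$ projecting to $p$. $\alpha<_3\beta$ means $\alpha,\beta$ overlap and $h_\alpha\le h_\beta$ on $\mathrm{conv}(\alpha)\cap\mathrm{conv}(\beta)$. For $T\in S(n,2)$, $h_T(p)=h_\rho(p)$ for $p\in\mathrm{conv}(\rho)$, $\rho\in T$; $e\le_3T$ means $h_e\le h_T$ on $\mathrm{conv}(e)$, and $T\le_3e$ means $h_T\le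 h_e$ on $\mathrm{conv}(e)$. *)

(* Defs.v *)
From mathcomp Require Import all_boot all_order all_algebra.
From mathcomp Require Import reals.
Set Implicit Arguments. Unset Strict Implicit. Unset Printing Implicit Defensive.
Import Order.TTheory GRing.Theory Num.Theory.
Local Open Scope ring_scope.

Section Cyclic.
Variables (R : realType) (n : nat) (t : 'I_n -> R).

Definition g2 (i : 'I_n) : R * R := (t i, t i ^+ 2).

(* [lift a p z] : the point of conv{gamma_3(t_i) : i in a} with last
   coordinate z projects to p in the plane.  In particular p is in conv(a). *)
Definition lift (a : {set 'I_n}) (p : R * R) (z : R) : Prop :=
  exists lam : 'I_n -> R,
    [/\ (forall i, 0 <= lam i), (forall i, i \notin a -> lam i = 0),
        \sum_i lam i = 1,
        p = (\sum_i lam i * t i, \sum_i lam i * t i ^+ 2)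
      & z = \sum_i lam i * t i ^+ 3].

Definition in_conv (a : {set 'I_n}) (p : R * R) : Prop := exists z, lift a p z.

Definition is_edge (e : {set 'I_n}) : Prop := #|e| = 2%N.

Definition cross (e f : {set 'I_n}) : Prop :=
  exists p, [/\ in_conv e p, in_conv f p &
                ~ (exists i, i \in e :&: f /\ p = g2 i)].

(* h_a <= h_b on conv(a) /\ conv(b) *)
Definition height_le (a b : {set 'I_n}) : Prop :=
  forall p z1 z2, lift a p z1 -> lift b p z2 -> z1 <= z2.

(* a <_3 b for edges (overlap = cross) *)
Definition lt3 (e f : {set 'I_n}) : Prop := cross e f /\ height_le e f.

Definition triangulation (T : {set {set 'I_n}}) : Prop :=
  [/\ (forall r, r \in T -> #|r| = 3%N),
      (forall p, in_conv setT p <-> exists2 r, r \in T & in_conv r p)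
    & (forall r s, r \in T -> s \in T ->
         forall p, (in_conv r p /\ in_conv s p) <-> in_conv (r :&: s) p)].

Definition edge_le_T (e : {set 'I_n}) (T : {set {set 'I_n}}) : Prop :=
  forall r, r \in T -> height_le e r.

Definition T_le_edge (T : {set {set 'I_n}}) (e : {set 'I_n}) : Prop :=
  forall r, r \in T -> height_le r e.

Definition edge_in_T (e : {set 'I_n}) (T : {set {set 'I_n}}) : Prop :=
  exists2 r, r \in T & e \subset r.

End Cyclic.

(* Main.v *)
Require Import Defs.
From mathcomp Require Import all_boot all_order all_algebra.
From mathcomp Require Import reals.
From mathcomp Require Import ring lra zify.
Import Order.TTheory GRing.Theory Num.Theory.
Local Open Scope ring_scope.
Set Implicit Arguments. Unset Strict Implicit. Unset Printing Implicit Defensive.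


Ltac sg := first [ lra | apply: mulr_ge0; sg | apply: mulr_le0; sg
  | apply: mulr_ge0_le0; sg | apply: mulr_le0_ge0; sg ].

Definition P3 (R : realType) (r1 r2 r3 u : R) := (u - r1) * (u - r2) * (u - r3).

Lemma triA (R : realType) (ta tb tx ty tz : R) : ta < tb -> tx < ty -> ty < tz ->
  ~ (tx < ta /\ ta < ty /\ ty < tb) -> ~ (ty < ta /\ ta < tz /\ tz < tb) ->
  ~ (tx < ta /\ ta < tz /\ tz < tb) ->
  exists r1 r2 r3, [/\ P3 r1 r2 r3 ta <= 0, P3 r1 r2 r3 tb <= 0,
     0 <= P3 r1 r2 r3 tx, 0 <= P3 r1 r2 r3 ty & 0 <= P3 r1 r2 r3 tz].
Proof.
move=> hab hxy hyz N1 N2 N3; rewrite /P3.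
have C1 : (ta <= tx \/ ty <= ta /\ ta <= tz) -> (tb <= tx \/ ty <= tb /\ tb <= tz) ->
  exists r1 r2 r3, [/\ (ta - r1) * (ta - r2) * (ta - r3) <= 0, (tb - r1) * (tb - r2) * (tb - r3) <= 0,
     0 <= (tx - r1) * (tx - r2) * (tx - r3), 0 <= (ty - r1) * (ty - r2) * (ty - r3)
   & 0 <= (tz - r1) * (tz - r2) * (tz - r3)].
  move=> ha hb; clear N1 N2 N3; exists tx, ty, tz; split; first (by case: ha => -[]*; sg);
    first (by case: hb => -[]*; sg); sg.
have [h1|h1] := lerP ta tx.
  have [h2|h2] := lerP tb tx; first by apply: C1; lra.
  have [h3|h3] := ltrP tb ty.
    clear N1 N2 N3; exists ta, tb, tx; split; sg.
  have [h4|h4] := lerP tb tz; first by apply: C1; lra.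
  clear N1 N2 N3; exists ta, tb, tz; split; sg.
have [h2|h2] := ltrP ta ty.
  have [h3|h3] := lerP tb ty; last by exfalso; lra.
  clear N1 N2 N3; exists ta, tb, tx; split; sg.
have [h3|h3] := lerP ta tz.
  have [h4|h4] := lerP tb tz; first by apply: C1; lra.
  have h5 : tz <= ta by lra.
  clear N1 N2 N3; exists ta, tb, tx; split; sg.
clear N1 N2 N3; exists ta, tb, tx; split; sg.
Qed.


Lemma triB (R : realType) (ta tb tx ty tz : R) : ta < tb -> tx < ty -> ty < tz ->
  ~ (ta < tx /\ tx < tb /\ tb < ty) -> ~ (ta < ty /\ ty < tb /\ tb < tz) ->
  ~ (ta < tx /\ tx < tb /\ tb < tz) ->
  exists r1 r2 r3, [/\ 0 <= P3 r1 r2 r3 ta, 0 <= P3 r1 r2 r3 tb,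
     P3 r1 r2 r3 tx <= 0, P3 r1 r2 r3 ty <= 0 & P3 r1 r2 r3 tz <= 0].
Proof.
move=> hab hxy hyz N1 N2 N3.
have [] := @triA R (- tb) (- ta) (- tz) (- ty) (- tx); try lra.
move=> r1 [r2 [r3 []]]; rewrite /P3 => h1 h2 h3 h4 h5.
exists (- r1), (- r2), (- r3); rewrite /P3; split.
- have -> : (ta - - r1) * (ta - - r2) * (ta - - r3) = - ((- ta - r1) * (- ta - r2) * (- ta - r3)) by ring.
  lra.
- have -> : (tb - - r1) * (tb - - r2) * (tb - - r3) = - ((- tb - r1) * (- tb - r2) * (- tb - r3)) by ring.
  lra.
- have -> : (tx - - r1) * (tx - - r2) * (tx - - r3) = - ((- tx - r1) * (- tx - r2) * (- tx - r3)) by ring.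
  lra.
- have -> : (ty - - r1) * (ty - - r2) * (ty - - r3) = - ((- ty - r1) * (- ty - r2) * (- ty - r3)) by ring.
  lra.
- have -> : (tz - - r1) * (tz - - r2) * (tz - - r3) = - ((- tz - r1) * (- tz - r2) * (- tz - r3)) by ring.
  lra.
Qed.

Section Geo.
Variables (R : realType) (n : nat) (t : 'I_n -> R).

Lemma sumP (lam : 'I_n -> R) (c0 c1 c2 c3 : R) :
  \sum_i lam i * (c0 + c1 * t i + c2 * t i ^+ 2 + c3 * t i ^+ 3) =
  c0 * (\sum_i lam i) + c1 * (\sum_i lam i * t i) + c2 * (\sum_i lam i * t i ^+ 2)
  + c3 * (\sum_i lam i * t i ^+ 3).
Proof. rewrite !mulr_sumr -!big_split /=; apply: eq_bigr => i _; ring. Qed.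

Lemma lift_sub (a b : {set 'I_n}) p z : a \subset b -> Defs.lift t a p z -> Defs.lift t b p z.
Proof.
move=> sab [lam [h0 h1 h2 h3 h4]]; exists lam; split => // i ib.
by apply: h1; apply: contra ib; apply: (subsetP sab).
Qed.

Lemma in_conv_sub (a b : {set 'I_n}) p : a \subset b -> in_conv t a p -> in_conv t b p.
Proof. by move=> sab [z hz]; exists z; apply: lift_sub hz. Qed.

Lemma HL (S T : {set 'I_n}) : (exists r1 r2 r3,
    (forall i, i \in S -> P3 r1 r2 r3 (t i) <= 0) /\
    (forall i, i \in T -> 0 <= P3 r1 r2 r3 (t i))) -> height_le t S T.
Proof.
move=> [r1 [r2 [r3 [hS hT]]]] p z1 z2 [lam [l0 l1 l2 l3 l4]] [mu [m0 m1 m2 m3 m4]].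
have key : forall nu : 'I_n -> R, \sum_i nu i * P3 r1 r2 r3 (t i) =
   (- (r1 * r2 * r3)) * (\sum_i nu i) + (r1 * r2 + r1 * r3 + r2 * r3) * (\sum_i nu i * t i)
   + (- (r1 + r2 + r3)) * (\sum_i nu i * t i ^+ 2) + 1 * (\sum_i nu i * t i ^+ 3).
  move=> nu; rewrite -sumP; apply: eq_bigr => i _; rewrite /P3; ring.
have hl : \sum_i lam i * P3 r1 r2 r3 (t i) <= 0.
  apply: sumr_le0 => i _; case: (boolP (i \in S)) => iS.
    by apply: mulr_ge0_le0 => //; apply: hS.
  by rewrite l1 // mul0r.
have hm : 0 <= \sum_i mu i * P3 r1 r2 r3 (t i).
  apply: sumr_ge0 => i _; case: (boolP (i \in T)) => iT.
    by apply: mulr_ge0 => //; apply: hT.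
  by rewrite m1 // mul0r.
move: hl hm; rewrite !key l2 m2 -l4 -m4.
move: m3; rewrite l3 => -[-> ->].
lra.
Qed.

End Geo.


Section Geo2.
Variables (R : realType) (n : nat) (t : 'I_n -> R).
Hypothesis tinj : forall i j, t i = t j -> i = j.

Lemma sum_supp2 (g : 'I_n -> R) (u v : 'I_n) : u != v ->
  (forall i, i != u -> i != v -> g i = 0) -> \sum_i g i = g u + g v.
Proof.
move=> uv hg; rewrite (bigD1 u) //= (bigD1 v) //=; last by rewrite eq_sym.
rewrite big1 ?addr0 // => i /andP [iu iv]; exact: hg.
Qed.

Lemma sum_supp1 (g : 'I_n -> R) (u : 'I_n) :
  (forall i, i != u -> g i = 0) -> \sum_i g i = g u.
Proof.
move=> hg; rewrite (bigD1 u) //= big1 ?addr0 // => i iu; exact: hg.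
Qed.

Lemma sep (r s : {set 'I_n}) (c0 c1 c2 : R) (u v : 'I_n) p :
  (forall i, i \in r -> 0 <= c0 + c1 * t i + c2 * t i ^+ 2) ->
  (forall i, i \in s -> c0 + c1 * t i + c2 * t i ^+ 2 <= 0) ->
  (forall i, c0 + c1 * t i + c2 * t i ^+ 2 = 0 -> i = u \/ i = v) ->
  in_conv t r p -> in_conv t s p -> in_conv t (r :&: s) p.
Proof.
move=> hr hs hz [z1 [lam [l0 l1 l2 l3 l4]]] [z2 [mu [m0 m1 m2 m3 m4]]].
pose f i := c0 + c1 * t i + c2 * t i ^+ 2.
have key : forall nu : 'I_n -> R, \sum_i nu i * f i =
   c0 * (\sum_i nu i) + c1 * (\sum_i nu i * t i)
   + c2 * (\sum_i nu i * t i ^+ 2) + 0 * (\sum_i nu i * t i ^+ 3).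
  move=> nu; rewrite -sumP; apply: eq_bigr => i _; rewrite /f; ring.
have hl : 0 <= \sum_i lam i * f i.
  apply: sumr_ge0 => i _; case: (boolP (i \in r)) => ir.
    by apply: mulr_ge0 => //; apply: hr.
  by rewrite l1 // mul0r.
have hm : \sum_i mu i * f i <= 0.
  apply: sumr_le0 => i _; case: (boolP (i \in s)) => iS.
    by apply: mulr_ge0_le0 => //; apply: hs.
  by rewrite m1 // mul0r.
have e : \sum_i lam i * f i = \sum_i mu i * f i.
  rewrite !key l2 m2 !mul0r; move: m3; rewrite l3 => -[-> ->] //.
have hl0 : \sum_i lam i * f i = 0 by lra.
have hm0 : \sum_i (- (mu i * f i)) = 0 by rewrite sumrN; lra.
have lz : forall i, lam i * f i = 0.
  move=> i; apply: (psumr_eq0P _ hl0) => // j _.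
  case: (boolP (j \in r)) => jr; first by apply: mulr_ge0 => //; apply: hr.
  by rewrite l1 // mul0r.
have mz : forall i, mu i * f i = 0.
  move=> i; apply/oppr_inj; rewrite oppr0; apply: (psumr_eq0P _ hm0) => // j _.
  rewrite oppr_ge0; case: (boolP (j \in s)) => js.
    by apply: mulr_ge0_le0 => //; apply: hs.
  by rewrite m1 // mul0r.
have lsup : forall i, i != u -> i != v -> lam i = 0.
  move=> i iu iv; have := lz i; move/eqP; rewrite mulf_eq0 => /orP [/eqP //|/eqP fz].
  by case: (hz i fz) => /eqP; rewrite ?(negbTE iu) ?(negbTE iv).
have msup : forall i, i != u -> i != v -> mu i = 0.
  move=> i iu iv; have := mz i; move/eqP; rewrite mulf_eq0 => /orP [/eqP //|/eqP fz].
  by case: (hz i fz) => /eqP; rewrite ?(negbTE iu) ?(negbTE iv).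
have eqlm : forall i, lam i = mu i.
  have ep : p = (\sum_i mu i * t i, \sum_i mu i * t i ^+ 2) := m3.
  move: l3; rewrite ep => -[eX eY].
  case: (eqVneq u v) => [euv|uv]; first subst v.
    have s1 : \sum_i lam i = lam u by apply: sum_supp1 => i iu; apply: lsup.
    have s2 : \sum_i mu i = mu u by apply: sum_supp1 => i iu; apply: msup.
    move=> i; case: (eqVneq i u) => [->|iu]; first by lra.
    by rewrite lsup // msup.
  have s1 : \sum_i lam i = lam u + lam v by apply: sum_supp2 => // i iu iv; apply: lsup.
  have s2 : \sum_i mu i = mu u + mu v by apply: sum_supp2 => // i iu iv; apply: msup.
  have s3 : \sum_i lam i * t i = lam u * t u + lam v * t v.
    by apply: sum_supp2 => // i iu iv; rewrite lsup // mul0r.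
  have s4 : \sum_i mu i * t i = mu u * t u + mu v * t v.
    by apply: sum_supp2 => // i iu iv; rewrite msup // mul0r.
  have tuv : t u - t v != 0.
    by rewrite subr_eq0; apply/eqP => /tinj /eqP; rewrite (negbTE uv).
  have eu : (lam u - mu u) * (t u - t v) = 0.
    have h : lam u * t u + lam v * t v = mu u * t u + mu v * t v by rewrite -s3 -s4.
    have hv : lam v - mu v + (lam u - mu u) = 0 by lra.
    have -> : (lam u - mu u) * (t u - t v) = (lam u * t u + lam v * t v)
       - (mu u * t u + mu v * t v) - (lam v - mu v + (lam u - mu u)) * t v by ring.
    by rewrite h hv mul0r subrr subr0.
  have euu : lam u = mu u.
    by move/eqP: eu; rewrite mulf_eq0 (negbTE tuv) orbF subr_eq0 => /eqP.
  move=> i; case: (eqVneq i u) => [->//|iu]; case: (eqVneq i v) => [->|iv]; first lra.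
  by rewrite lsup // msup.
exists z1, lam; split => // i; rewrite inE negb_and => /orP [ir|iS]; first exact: l1.
by rewrite eqlm m1.
Qed.

End Geo2.


Section Geo3.
Variables (R : realType) (n : nat) (t : 'I_n -> R).

Lemma cut (W W' : {set 'I_n}) (a b : 'I_n) (c : R) p :
  t a < t b -> c != 0 -> a \in W' -> b \in W' ->
  (forall i, i \in W -> c * ((t i - t a) * (t i - t b)) < 0 -> i \in W') ->
  in_conv t W p -> c * (p.2 - (t a + t b) * p.1 + t a * t b) <= 0 -> in_conv t W' p.
Proof.
move=> hab c0 aW bW hW [z [lam [l0 l1 l2 l3 l4]]] hneg.
pose g i := c * ((t i - t a) * (t i - t b)).
pose Sn := \sum_i (if g i < 0 then lam i * - g i else 0).
pose Sp := \sum_i (if g i < 0 then 0 else lam i * g i).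
have Sn0 : 0 <= Sn.
  apply: sumr_ge0 => i _; case: ifP => // gi; apply: mulr_ge0 => //; lra.
have Sp0 : 0 <= Sp.
  apply: sumr_ge0 => i _; case: ifP => // /negbT; rewrite -leNgt => gi; exact: mulr_ge0.
have Sg : \sum_i lam i * g i = Sp - Sn.
  rewrite /Sp /Sn -sumrB; apply: eq_bigr => i _; case: ifP => _; ring.
have Sg2 : \sum_i lam i * g i = c * (p.2 - (t a + t b) * p.1 + t a * t b).
  have -> : \sum_i lam i * g i = \sum_i lam i * (c * (t a * t b) + (- c * (t a + t b)) * t i
     + c * t i ^+ 2 + 0 * t i ^+ 3) by apply: eq_bigr => i _; rewrite /g; ring.
  by rewrite sumP l2 l3 /=; ring.
have SpSn : Sp <= Sn by lra.
pose rho := Sp / Sn.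
have rho0 : 0 <= rho by apply: divr_ge0.
have rho1 : rho <= 1.
  rewrite /rho; have [->|Snp] := eqVneq Sn 0; first by rewrite invr0 mulr0.
  by rewrite ler_pdivrMr ?mul1r //; rewrite lt_def Snp Sn0.
have rhoS : Sp - rho * Sn = 0.
  rewrite /rho; have [Sn00|Snp] := eqVneq Sn 0; first by rewrite Sn00 mulr0; lra.
  by rewrite mulfVK ?subrr.
pose D i := if g i < 0 then rho * lam i else lam i.
have D0 : forall i, 0 <= D i by move=> i; rewrite /D; case: ifP => _ //; exact: mulr_ge0.
have DL : forall i, 0 <= lam i - D i.
  move=> i; rewrite /D; case: ifP => _; last by rewrite subrr.
  have := l0 i; nra.
have SDg : \sum_i D i * g i = 0.
  apply: (etrans _ rhoS); rewrite /Sp /Sn mulr_sumr -sumrB; apply: eq_bigr => i _; rewrite /D.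
  case: ifP => _; ring.
have SDq : \sum_i D i * ((t i - t a) * (t i - t b)) = 0.
  move: SDg; rewrite /g.
  have -> : \sum_i D i * (c * ((t i - t a) * (t i - t b))) =
     c * \sum_i D i * ((t i - t a) * (t i - t b)).
    by rewrite mulr_sumr; apply: eq_bigr => i _; ring.
  by move/eqP; rewrite mulf_eq0 (negbTE c0) /= => /eqP.
pose d := t b - t a.
have d0 : d != 0 by rewrite /d subr_eq0; apply/eqP => h; move: hab; rewrite h ltxx.
pose na := \sum_i D i * ((t b - t i) ^+ 2 / d ^+ 2).
pose nb := \sum_i D i * ((t i - t a) ^+ 2 / d ^+ 2).
have na0 : 0 <= na.
  apply: sumr_ge0 => i _; apply: mulr_ge0 => //; apply: divr_ge0; exact: sqr_ge0.
have nb0 : 0 <= nb.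
  apply: sumr_ge0 => i _; apply: mulr_ge0 => //; apply: divr_ge0; exact: sqr_ge0.
have E : forall (w : 'I_n -> R) (ka kb k : R),
    (forall i, ((t b - t i) ^+ 2 / d ^+ 2) * ka + ((t i - t a) ^+ 2 / d ^+ 2) * kb
        = w i + k * ((t i - t a) * (t i - t b))) ->
    na * ka + nb * kb = \sum_i D i * w i.
  move=> w ka kb k hx.
  have -> : na * ka + nb * kb = \sum_i (D i * w i + k * (D i * ((t i - t a) * (t i - t b)))).
    rewrite /na /nb !mulr_suml -big_split; apply: eq_bigr => i _ /=.
    transitivity (D i * (((t b - t i) ^+ 2 / d ^+ 2) * ka + ((t i - t a) ^+ 2 / d ^+ 2) * kb)); first ring.
    rewrite hx; ring.
  by rewrite big_split /= -mulr_sumr SDq mulr0 addr0.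
pose nu i := lam i - D i + (if i == a then na else 0) + (if i == b then nb else 0).
have ab : a != b by apply/eqP => h; move: hab; rewrite h ltxx.
have Snu : forall (w : 'I_n -> R), \sum_i nu i * w i =
    \sum_i lam i * w i - \sum_i D i * w i + na * w a + nb * w b.
  move=> w; rewrite /nu.
  have -> : \sum_i (lam i - D i + (if i == a then na else 0) + (if i == b then nb else 0)) * w i
    = \sum_i (lam i * w i - D i * w i) + \sum_i ((if i == a then na else 0) * w i)
      + \sum_i ((if i == b then nb else 0) * w i).
    by rewrite -!big_split /=; apply: eq_bigr => i _; ring.
  rewrite sumrB (@sum_supp1 _ _ (fun i => (if i == a then na else 0) * w i) a); last first.
    by move=> i /negbTE ->; rewrite mul0r.
  rewrite (@sum_supp1 _ _ (fun i => (if i == b then nb else 0) * w i) b); last first.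
    by move=> i /negbTE ->; rewrite mul0r.
  by rewrite !eqxx.
have sm1 : forall F : 'I_n -> R, \sum_i F i * 1 = \sum_i F i.
  by move=> F; apply: eq_bigr => i _; rewrite mulr1.
have dd : d ^+ 2 != 0 by rewrite expf_neq0.
exists (\sum_i nu i * t i ^+ 3), nu; split.
- move=> i; rewrite /nu; apply: addr_ge0; first apply: addr_ge0 => //.
    by case: ifP.
  by case: ifP.
- move=> i iW'; rewrite /nu.
  have ia : (i == a) = false by apply/negbTE; apply: contraNneq iW' => ->.
  have ib : (i == b) = false by apply/negbTE; apply: contraNneq iW' => ->.
  rewrite ia ib !addr0 /D; case: ifP => gi; last by rewrite subrr.
  case: (boolP (i \in W)) => iW; first by rewrite hW in iW'.
  by rewrite l1 // mulr0 subrr.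
- have h1 := Snu (fun _ => 1).
  have h2 := E (fun _ => 1) 1 1 (2 / d ^+ 2).
  rewrite /= !sm1 in h1 h2; rewrite h1 -h2; last by move=> i; rewrite /d; field.
  rewrite l2; ring.
- rewrite l3; congr (_, _).
  + have h1 := Snu t.
    have h2 := E t (t a) (t b) ((t a + t b) / d ^+ 2).
    rewrite h1 -h2; last by move=> i; rewrite /d; field.
    ring.
  + have h1 := Snu (fun i => t i ^+ 2).
    have h2 := E (fun i => t i ^+ 2) (t a ^+ 2) (t b ^+ 2) (2 * t a * t b / d ^+ 2).
    rewrite /= in h1 h2; rewrite h1 -h2; last by move=> i; rewrite /d; field.
    ring.
- by [].
Qed.

End Geo3.


Section Comb.
Variables (m : nat) (A B : {set {set 'I_m.+1}}).

Definition badA (x y : nat) := exists a0 a1 : 'I_m.+1,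
  [set a0; a1] \in A /\ [/\ (x < a0)%N, (a0 < y)%N & (y < a1)%N].
Definition badB (x y : nat) := exists b0 b1 : 'I_m.+1,
  [set b0; b1] \in B /\ [/\ (b0 < x)%N, (x < b1)%N & (b1 < y)%N].
Definition good x y := ~ badA x y /\ ~ badB x y.

Definition cov (lo hi k : nat) := [exists b0 : 'I_m.+1, exists b1 : 'I_m.+1,
  ([set b0; b1] \in B) && [&& (lo <= b0)%N, (b0 < k)%N, (k < b1)%N & (b1 < hi)%N]].

Definition apex (lo hi : nat) :=
  let s := iota lo.+1 (hi - lo.+1) in nth hi.-1 s (find (fun k => ~~ cov lo hi k) s).

Lemma apexP lo hi : (lo.+1 < hi)%N ->
  [/\ (lo < apex lo hi)%N, (apex lo hi < hi)%N, ~~ cov lo hi (apex lo hi)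
    & forall j, (lo < j)%N -> (j < apex lo hi)%N -> cov lo hi j].
Proof.
move=> h; rewrite /apex.
set s := iota lo.+1 (hi - lo.+1); set P := fun k => ~~ cov lo hi k.
have hP : has P s.
  apply/hasP; exists hi.-1; first by rewrite mem_iota; lia.
  rewrite /P; apply/negP => /existsP [b0 /existsP [b1 /andP [_ /and4P [_ _ h1 h2]]]]; lia.
have fs : (find P s < size s)%N by rewrite -has_find.
have := nth_find hi.-1 hP; rewrite -/s => Pk.
have ks : nth hi.-1 s (find P s) \in s by apply: mem_nth.
move: ks; rewrite mem_iota => /andP [k1 k2].
split => //; first lia.
move=> j j1 j2.
have sz : size s = (hi - lo.+1)%N by rewrite size_iota.
have ej : j = nth hi.-1 s (j - lo.+1) by rewrite nth_iota; lia.
have jf : (j - lo.+1 < find P s)%N.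
  move: j2; rewrite nth_iota ?sz //; lia.
by have := before_find hi.-1 jf; rewrite /P -ej => /negbFE.
Qed.

Hypothesis CC : forall a0 a1 b0 b1 : 'I_m.+1, [set a0; a1] \in A -> [set b0; b1] \in B ->
  ~ [/\ (b0 < a0)%N, (a0 < b1)%N & (b1 < a1)%N].

Lemma apex_good lo hi : (lo.+1 < hi)%N -> good lo hi ->
  good lo (apex lo hi) /\ good (apex lo hi) hi.
Proof.
move=> h [gA gB]; have [k1 k2 kc kmin] := apexP h.
set k := apex lo hi in k1 k2 kc kmin *.
split; split.
- move=> [a0 [a1 [aA [h1 h2 h3]]]].
  have a1h : (a1 <= hi)%N.
    rewrite leqNgt; apply/negP => h4; apply: gA; exists a0, a1; split => //; split => //; lia.
  have /existsP [b0 /existsP [b1 /andP [bB /and4P [c1 c2 c3 c4]]]] := kmin a0 h1 h2.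
  have b1k : (b1 <= k)%N.
    rewrite leqNgt; apply/negP => h5; move/negP: kc; apply; apply/existsP; exists b0.
    apply/existsP; exists b1; rewrite bB /=; apply/and4P; split => //; lia.
  apply: (CC aA bB); split => //; lia.
- move=> [b0 [b1 [bB [h1 h2 h3]]]]; apply: gB; exists b0, b1; split => //; split => //; lia.
- move=> [a0 [a1 [aA [h1 h2 h3]]]]; apply: gA; exists a0, a1; split => //; split => //; lia.
- move=> [b0 [b1 [bB [h1 h2 h3]]]].
  have b0lo : (lo <= b0)%N.
    rewrite leqNgt; apply/negP => h4; apply: gB; exists b0, b1; split => //; split => //; lia.
  move/negP: kc; apply; apply/existsP; exists b0; apply/existsP; exists b1.
  rewrite bB /=; apply/and4P; split => //; lia.
Qed.

Definition tset (x y z : nat) : {set 'I_m.+1} :=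
  [set i : 'I_m.+1 | [|| val i == x, val i == y | val i == z]].
Definition iv (lo hi : nat) : {set 'I_m.+1} := [set i : 'I_m.+1 | (lo <= i <= hi)%N].

Fixpoint tri (f lo hi : nat) : {set {set 'I_m.+1}} :=
  if f is f'.+1 then
    (if (lo.+1 < hi)%N then
       tset lo (apex lo hi) hi |: (tri f' lo (apex lo hi) :|: tri f' (apex lo hi) hi)
     else set0)
  else set0.

Lemma tri_cells f lo hi r : (hi - lo <= f)%N -> good lo hi -> r \in tri f lo hi ->
  exists x y z, [/\ (lo <= x < y)%N, (y < z <= hi)%N, r = tset x y z
    & [/\ good x y, good y z & good x z]].
Proof.
elim: f lo hi => [|f IH] lo hi /= hf g; first by rewrite inE.
case: ifP => h; last by rewrite inE.
have [k1 k2 _ _] := apexP h; have [g1 g2] := apex_good h g.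
rewrite !inE => /orP [/eqP ->|/orP [rr|rr]].
- by exists lo, (apex lo hi), hi; split => //; apply/andP; split => //; lia.
- have [x [y [z [h1 h2 h3 h4]]]] := IH lo (apex lo hi) (ltac:(lia)) g1 rr.
  exists x, y, z; split => //; apply/andP; lia.
- have [x [y [z [h1 h2 h3 h4]]]] := IH (apex lo hi) hi (ltac:(lia)) g2 rr.
  exists x, y, z; split => //; apply/andP; lia.
Qed.

End Comb.


Lemma neg_between (R : realType) (x u v : R) : u < v -> (x - u) * (x - v) < 0 -> u < x /\ x < v.
Proof.
move=> uv h; have [h1|h1] := lerP x u.
  have : 0 <= (x - u) * (x - v) by apply: mulr_le0; lra.
  lra.
have [h2|h2] := lerP v x; last by [].
have : 0 <= (x - u) * (x - v) by apply: mulr_ge0; lra.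
lra.
Qed.

Lemma pos_outside (R : realType) (x u v : R) : u < v -> 0 < (x - u) * (x - v) -> x < u \/ v < x.
Proof.
move=> uv h; have [h1|h1] := ltrP x u; first by left.
have [h2|h2] := ltrP v x; first by right.
have : (x - u) * (x - v) <= 0 by apply: mulr_ge0_le0; lra.
lra.
Qed.

Section Main.
Variables (R : realType) (m : nat) (t : 'I_m.+1 -> R).
Hypothesis tmono : forall i j : 'I_m.+1, (i < j)%N -> t i < t j.
Variables (A B : {set {set 'I_m.+1}}).
Hypothesis CC : forall a0 a1 b0 b1 : 'I_m.+1, [set a0; a1] \in A -> [set b0; b1] \in B ->
  ~ [/\ (b0 < a0)%N, (a0 < b1)%N & (b1 < a1)%N].

Lemma tlt (i j : 'I_m.+1) : (t i < t j) = (i < j)%N.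
Proof.
case: (ltngtP i j) => h; first by rewrite tmono.
  by apply/negbTE; rewrite -leNgt ltW // tmono.
by have -> : i = j by apply: val_inj.
Qed.

Lemma tle (i j : 'I_m.+1) : (t i <= t j) = (i <= j)%N.
Proof. by rewrite leqNgt -tlt -leNgt. Qed.

Lemma tinj (i j : 'I_m.+1) : t i = t j -> i = j.
Proof. by move=> h; apply/val_inj/eqP; rewrite eqn_leq -!tle h lexx. Qed.

Lemma cell_sub f lo hi r : (hi - lo <= f)%N -> good A B lo hi -> r \in tri B f lo hi ->
  forall i : 'I_m.+1, i \in r -> (lo <= i <= hi)%N.
Proof.
move=> hf g rr i; have [x [y [z [/andP [h1 h2] /andP [h3 h4] -> _]]]] := tri_cells CC hf g rr.
by rewrite inE => /or3P [] /eqP ->; lia.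
Qed.

Lemma in_tset (x y z : nat) (i : 'I_m.+1) : i \in tset m x y z -> [\/ val i = x, val i = y | val i = z].
Proof. by rewrite inE => /or3P [] /eqP ->; [apply: Or31|apply: Or32|apply: Or33]. Qed.

Lemma tri_cover f lo hi p : (hi - lo <= f)%N -> (lo < hi)%N -> (hi <= m)%N -> good A B lo hi ->
  in_conv t (iv m lo hi) p ->
  (exists2 r, r \in tri B f lo hi & in_conv t r p) \/ in_conv t (tset m lo hi hi) p.
Proof.
elim: f lo hi => [|f IH] lo hi hf h1 h2 g hp; first lia.
rewrite /=; case: ifP => h; last first.
  move/negbT: h; rewrite -leqNgt => h.
  right; apply: in_conv_sub hp; apply/subsetP => i; rewrite !inE => /andP [i1 i2].
  have [e|e] : (i : nat) = lo \/ (i : nat) = hi by lia.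
    by apply/or3P; apply: Or31; apply/eqP.
  by apply/or3P; apply: Or32; apply/eqP.
have [k1 k2 _ _] := apexP B h; have [g1 g2] := apex_good CC h g.
set k := apex B lo hi in k1 k2 g1 g2 *.
set top := tset m lo k hi.
have topin : top \in tset m lo k hi |: (tri B f lo k :|: tri B f k hi) by rewrite !inE eqxx.
have sub1 : forall x y, tset m x y y \subset top -> in_conv t (tset m x y y) p ->
    (exists2 r, r \in tset m lo k hi |: (tri B f lo k :|: tri B f k hi) & in_conv t r p)
    \/ in_conv t (tset m lo hi hi) p.
  by move=> x y s hx; left; exists top => //; apply: in_conv_sub hx.
pose a : 'I_m.+1 := inord lo; pose kk : 'I_m.+1 := inord k; pose b : 'I_m.+1 := inord hi.
have va : (a : nat) = lo by rewrite /a /= inordK //; lia.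
have vk : (kk : nat) = k by rewrite /kk /= inordK //; lia.
have vb : (b : nat) = hi by rewrite /b /= inordK //; lia.
have va' : val a = lo := va.
have vk' : val kk = k := vk.
have vb' : val b = hi := vb.
have tak : t a < t kk by rewrite tlt va vk.
have tkb : t kk < t b by rewrite tlt vb vk.
have [hF|hF] := lerP (p.2 - (t a + t kk) * p.1 + t a * t kk) 0.
  have hp1 : in_conv t (iv m lo k) p.
    apply: (cut (W := iv m lo hi) (a := a) (b := kk) (c := 1)) => //; rewrite ?oner_eq0 ?mul1r //.
    - by rewrite inE ?va ?va'; lia.
    - by rewrite inE ?vk ?vk'; lia.
    - move=> i _; rewrite mul1r => /(neg_between tak); rewrite !tlt va vk => -[i1 i2]; rewrite inE; lia.
  case: (IH lo k ltac:(lia) k1 ltac:(lia) g1 hp1) => [[r r1 r2]|hr].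
    by left; exists r => //; rewrite !inE r1 orbT.
  apply: sub1 hr; apply/subsetP => i /in_tset; rewrite inE => -[] ->; rewrite eqxx ?orbT //.
pose W1 : {set 'I_m.+1} := [set i : 'I_m.+1 | (val i == lo) || (k <= i <= hi)%N].
have hp1 : in_conv t W1 p.
  apply: (cut (W := iv m lo hi) (a := a) (b := kk) (c := -1)) => //.
  - by rewrite oppr_eq0 oner_eq0.
  - by rewrite /W1 inE ?va ?va' eqxx.
  - by rewrite /W1 inE ?vk ?vk'; apply/orP; right; lia.
  - move=> i; rewrite inE => /andP [i1 i2]; rewrite mulN1r oppr_lt0 => /(pos_outside tak).
    by rewrite !tlt va vk => -[]; [lia|rewrite /W1 inE; move=> ?; apply/orP; right; lia].
  - lra.
have [hG|hG] := lerP (p.2 - (t kk + t b) * p.1 + t kk * t b) 0.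
  have hp2 : in_conv t (iv m k hi) p.
    apply: (cut (W := W1) (a := kk) (b := b) (c := 1)) => //; rewrite ?oner_eq0 ?mul1r //.
    - by rewrite inE ?vk ?vk'; lia.
    - by rewrite inE ?vb ?vb'; lia.
    - move=> i _; rewrite mul1r => /(neg_between tkb); rewrite !tlt vb vk => -[i1 i2]; rewrite inE; lia.
  case: (IH k hi ltac:(lia) k2 h2 g2 hp2) => [[r r1 r2]|hr].
    by left; exists r => //; rewrite !inE r1 !orbT.
  apply: sub1 hr; apply/subsetP => i /in_tset; rewrite inE => -[] ->; rewrite eqxx ?orbT //.
left; exists top => //.
apply: (cut (W := W1) (a := kk) (b := b) (c := -1)) => //.
- by rewrite oppr_eq0 oner_eq0.
- by rewrite inE ?vk ?vk' eqxx orbT.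
- by rewrite inE ?vb ?vb' eqxx !orbT.
- move=> i; rewrite /W1 inE => /orP [il|/andP [i1 i2]].
    by rewrite inE il.
  rewrite mulN1r oppr_lt0 => /(pos_outside tkb).
  by rewrite !tlt vb vk => -[]; lia.
- lra.
Qed.

End Main.


Section Main2.
Variables (R : realType) (m : nat) (t : 'I_m.+1 -> R).
Hypothesis tmono : forall i j : 'I_m.+1, (i < j)%N -> t i < t j.
Variables (A B : {set {set 'I_m.+1}}).
Hypothesis CC : forall a0 a1 b0 b1 : 'I_m.+1, [set a0; a1] \in A -> [set b0; b1] \in B ->
  ~ [/\ (b0 < a0)%N, (a0 < b1)%N & (b1 < a1)%N].

Let tlt := tlt tmono.
Let tle := tle tmono.
Let tinj := tinj tmono.

Lemma sep2 (r s : {set 'I_m.+1}) (u v : 'I_m.+1) p : t u < t v ->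
  (forall i, i \in r -> 0 <= (t i - t u) * (t i - t v)) ->
  (forall i, i \in s -> (t i - t u) * (t i - t v) <= 0) ->
  in_conv t r p -> in_conv t s p -> in_conv t (r :&: s) p.
Proof.
move=> uv hr hs; apply: (@sep _ _ t tinj r s (t u * t v) (- (t u + t v)) 1 u v p).
- move=> i /hr; congr (_ <= _); ring.
- move=> i /hs; congr (_ <= _); ring.
- move=> i h; have : (t i - t u) * (t i - t v) = 0 by rewrite -h; ring.
  move/eqP; rewrite mulf_eq0 !subr_eq0 => /orP [] /eqP /tinj ->; [left|right] => //.
Qed.

Lemma sep1 (r s : {set 'I_m.+1}) (u : 'I_m.+1) p :
  (forall i, i \in r -> (i <= u)%N) -> (forall i, i \in s -> (u <= i)%N) ->
  in_conv t r p -> in_conv t s p -> in_conv t (r :&: s) p.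
Proof.
move=> hr hs; apply: (@sep _ _ t tinj r s (t u) (-1) 0 u u p).
- move=> i /hr; rewrite -tle => h; lra.
- move=> i /hs; rewrite -tle => h; lra.
- move=> i h; left; apply: tinj; lra.
Qed.

Lemma tri_inter f lo hi r s p : (hi - lo <= f)%N -> (lo < hi)%N -> (hi <= m)%N -> good A B lo hi ->
  r \in tri B f lo hi -> s \in tri B f lo hi -> in_conv t r p -> in_conv t s p ->
  in_conv t (r :&: s) p.
Proof.
elim: f lo hi r s => [|f IH] lo hi r s hf h1 h2 g; first by rewrite inE.
rewrite /=; case: ifP => h; last by rewrite inE.
have [k1 k2 _ _] := apexP B h; have [g1 g2] := apex_good CC h g.
set k := apex B lo hi in k1 k2 g1 g2 *.
pose a : 'I_m.+1 := inord lo; pose kk : 'I_m.+1 := inord k; pose b : 'I_m.+1 := inord hi.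
have va : (a : nat) = lo by rewrite /a /= inordK //; lia.
have vk : (kk : nat) = k by rewrite /kk /= inordK //; lia.
have vb : (b : nat) = hi by rewrite /b /= inordK //; lia.
have tak : t a < t kk by rewrite tlt va vk.
have tkb : t kk < t b by rewrite tlt vb vk.
have topv : forall i, i \in tset m lo k hi -> [\/ i = a, i = kk | i = b].
  move=> i /in_tset [] e; [apply: Or31|apply: Or32|apply: Or33]; apply: val_inj => /=;
    rewrite ?va ?vk ?vb //.
have subL : forall r, r \in tri B f lo k -> forall i, i \in r -> (lo <= i <= k)%N.
  move=> r0 r0i; apply: (cell_sub CC _ g1 r0i); lia.
have subR : forall r, r \in tri B f k hi -> forall i, i \in r -> (k <= i <= hi)%N.
  move=> r0 r0i; apply: (cell_sub CC _ g2 r0i); lia.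
have TL : forall s, s \in tri B f lo k -> in_conv t (tset m lo k hi) p -> in_conv t s p ->
    in_conv t (tset m lo k hi :&: s) p.
  move=> s0 s0i; apply: (sep2 tak).
  - by move=> i /topv [] ->; sg.
  - move=> i /(subL _ s0i) /andP [i1 i2].
    have : t a <= t i by rewrite tle va.
    have : t i <= t kk by rewrite tle vk.
    move=> *; sg.
have TR : forall s, s \in tri B f k hi -> in_conv t (tset m lo k hi) p -> in_conv t s p ->
    in_conv t (tset m lo k hi :&: s) p.
  move=> s0 s0i; apply: (sep2 tkb).
  - by move=> i /topv [] ->; sg.
  - move=> i /(subR _ s0i) /andP [i1 i2].
    have : t kk <= t i by rewrite tle vk.
    have : t i <= t b by rewrite tle vb.
    move=> *; sg.
have LR : forall r s, r \in tri B f lo k -> s \in tri B f k hi -> in_conv t r p -> in_conv t s p ->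
    in_conv t (r :&: s) p.
  move=> r0 s0 r0i s0i; apply: (sep1 (u := kk)).
  - by move=> i /(subL _ r0i) /andP [i1 i2]; rewrite vk.
  - by move=> i /(subR _ s0i) /andP [i1 i2]; rewrite vk.
rewrite !inE => /orP [/eqP ->|/orP [rL|rR]] /orP [/eqP ->|/orP [sL|sR]] hr hs.
- by rewrite setIid.
- exact: TL.
- exact: TR.
- by rewrite setIC; apply: TL.
- exact: (IH lo k r s ltac:(lia) k1 ltac:(lia) g1 rL sL).
- exact: LR.
- by rewrite setIC; apply: TR.
- by rewrite setIC; apply: LR.
- exact: (IH k hi r s ltac:(lia) k2 h2 g2 rR sR).
Qed.

End Main2.


Section Main3.
Variables (R : realType) (m : nat) (t : 'I_m.+1 -> R).
Hypothesis tmono : forall i j : 'I_m.+1, (i < j)%N -> t i < t j.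
Variables (A B : {set {set 'I_m.+1}}).
Hypothesis CC : forall a0 a1 b0 b1 : 'I_m.+1, [set a0; a1] \in A -> [set b0; b1] \in B ->
  ~ [/\ (b0 < a0)%N, (a0 < b1)%N & (b1 < a1)%N].

Let tlt := tlt tmono.
Let tle := tle tmono.

Lemma sub_tset (e0 e1 : 'I_m.+1) x y z :
  [|| (e0 : nat) == x, (e0 : nat) == y | (e0 : nat) == z] ->
  [|| (e1 : nat) == x, (e1 : nat) == y | (e1 : nat) == z] ->
  [set e0; e1] \subset tset m x y z.
Proof. by move=> h0 h1; apply/subsetP => i; rewrite !inE => /orP [] /eqP ->. Qed.

Lemma tri_edge f lo hi (e0 e1 : 'I_m.+1) : (hi - lo <= f)%N -> (lo < hi)%N -> (hi <= m)%N ->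
  good A B lo hi -> [set e0; e1] \in A -> [set e0; e1] \in B ->
  (lo <= e0)%N -> (e0 < e1)%N -> (e1 <= hi)%N ->
  ((e0 : nat) = lo /\ (e1 : nat) = hi) \/ exists2 r, r \in tri B f lo hi & [set e0; e1] \subset r.
Proof.
move=> + + + + eA eB.
elim: f lo hi => [|f IH] lo hi hf h1 h2 g l0 l1 l2; first lia.
rewrite /=; case: ifP => h; last first.
  by move/negbT: h; rewrite -leqNgt => h; left; lia.
have [k1 k2 _ _] := apexP B h; have [g1 g2] := apex_good CC h g.
set k := apex B lo hi in k1 k2 g1 g2 *.
have topin : tset m lo k hi \in tset m lo k hi |: (tri B f lo k :|: tri B f k hi) by rewrite !inE eqxx.
case: (boolP (((e0 : nat) == lo) && ((e1 : nat) == hi))) => [/andP [/eqP ? /eqP ?]|ne]; first by left.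
right.
case: (leqP e1 k) => ek.
  case: (IH lo k ltac:(lia) k1 ltac:(lia) g1 l0 l1 ek) => [[? ?]|[r r1 r2]].
    by exists (tset m lo k hi) => //; apply: sub_tset; apply/or3P;
      [apply: Or31|apply: Or32]; apply/eqP.
  by exists r => //; rewrite !inE r1 orbT.
case: (leqP k e0) => ke.
  case: (IH k hi ltac:(lia) k2 h2 g2 ke l1 l2) => [[? ?]|[r r1 r2]].
    by exists (tset m lo k hi) => //; apply: sub_tset; apply/or3P;
      [apply: Or32|apply: Or33]; apply/eqP.
  by exists r => //; rewrite !inE r1 !orbT.
exfalso; case: (ltnP lo e0) => le0.
  by apply: g1.1; exists e0, e1; split.
have e0lo : (e0 : nat) = lo by lia.
have e1hi : (e1 < hi)%N.
  rewrite ltn_neqAle l2 andbT; apply: contra ne => /eqP ->; rewrite e0lo !eqxx.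
  done.
by apply: g2.2; exists e0, e1; split.
Qed.

Lemma tset_mem x y z (i : 'I_m.+1) : (x <= m)%N -> (y <= m)%N -> (z <= m)%N ->
  i \in tset m x y z -> [\/ i = inord x, i = inord y | i = inord z].
Proof.
move=> hx hy hz /in_tset [] e; [apply: Or31|apply: Or32|apply: Or33];
  apply: val_inj => /=; rewrite inordK //; lia.
Qed.

Lemma memset2 (a0 a1 i : 'I_m.+1) : i \in [set a0; a1] -> i = a0 \/ i = a1.
Proof. by rewrite !inE => /orP [] /eqP ->; [left|right]. Qed.

Lemma tri_hlA x y z (a0 a1 : 'I_m.+1) : (x < y)%N -> (y < z)%N -> (z <= m)%N ->
  good A B x y -> good A B y z -> good A B x z -> [set a0; a1] \in A -> (a0 < a1)%N ->
  height_le t [set a0; a1] (tset m x y z).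
Proof.
move=> xy yz zm gxy gyz gxz aA a01.
have xm : (x <= m)%N by apply: ltnW; apply: (ltn_trans xy); apply: leq_trans yz zm.
have ym : (y <= m)%N by apply: ltnW; apply: leq_trans yz zm.
have vx : (inord x : 'I_m.+1) = x :> nat by rewrite inordK.
have vy : (inord y : 'I_m.+1) = y :> nat by rewrite inordK.
have vz : (inord z : 'I_m.+1) = z :> nat by rewrite inordK.
have H1 : t a0 < t a1 by rewrite tlt.
have H2 : t (inord x) < t (inord y) by rewrite tlt vx vy.
have H3 : t (inord y) < t (inord z) by rewrite tlt vz vy.
have N1 : ~ (t (inord x) < t a0 /\ t a0 < t (inord y) /\ t (inord y) < t a1).
  move=> [hh1 [hh2 hh3]]; move: hh1 hh2 hh3; rewrite !tlt vx vy => hh1 hh2 hh3;  apply: gxy.1; by exists a0, a1; split => //; split.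
have N2 : ~ (t (inord y) < t a0 /\ t a0 < t (inord z) /\ t (inord z) < t a1).
  move=> [hh1 [hh2 hh3]]; move: hh1 hh2 hh3; rewrite !tlt vz vy => hh1 hh2 hh3; apply: gyz.1; by exists a0, a1; split => //; split.
have N3 : ~ (t (inord x) < t a0 /\ t a0 < t (inord z) /\ t (inord z) < t a1).
  move=> [hh1 [hh2 hh3]]; move: hh1 hh2 hh3; rewrite !tlt vx vz => hh1 hh2 hh3; apply: gxz.1; by exists a0, a1; split => //; split.
have [r1 [r2 [r3 [q1 q2 q3 q4 q5]]]] := triA H1 H2 H3 N1 N2 N3.
apply: HL; exists r1, r2, r3; split.
- by move=> i /memset2 [] ->.
- move=> i hi; have [] := @tset_mem x y z i xm ym zm hi => ->; assumption.
Qed.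

Lemma tri_hlB x y z (b0 b1 : 'I_m.+1) : (x < y)%N -> (y < z)%N -> (z <= m)%N ->
  good A B x y -> good A B y z -> good A B x z -> [set b0; b1] \in B -> (b0 < b1)%N ->
  height_le t (tset m x y z) [set b0; b1].
Proof.
move=> xy yz zm gxy gyz gxz bB b01.
have xm : (x <= m)%N by apply: ltnW; apply: (ltn_trans xy); apply: leq_trans yz zm.
have ym : (y <= m)%N by apply: ltnW; apply: leq_trans yz zm.
have vx : (inord x : 'I_m.+1) = x :> nat by rewrite inordK.
have vy : (inord y : 'I_m.+1) = y :> nat by rewrite inordK.
have vz : (inord z : 'I_m.+1) = z :> nat by rewrite inordK.
have H1 : t b0 < t b1 by rewrite tlt.
have H2 : t (inord x) < t (inord y) by rewrite tlt vx vy.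
have H3 : t (inord y) < t (inord z) by rewrite tlt vz vy.
have N1 : ~ (t b0 < t (inord x) /\ t (inord x) < t b1 /\ t b1 < t (inord y)).
  move=> [hh1 [hh2 hh3]]; move: hh1 hh2 hh3; rewrite !tlt vx vy => hh1 hh2 hh3; apply: gxy.2; by exists b0, b1; split => //; split.
have N2 : ~ (t b0 < t (inord y) /\ t (inord y) < t b1 /\ t b1 < t (inord z)).
  move=> [hh1 [hh2 hh3]]; move: hh1 hh2 hh3; rewrite !tlt vz vy => hh1 hh2 hh3; apply: gyz.2; by exists b0, b1; split => //; split.
have N3 : ~ (t b0 < t (inord x) /\ t (inord x) < t b1 /\ t b1 < t (inord z)).
  move=> [hh1 [hh2 hh3]]; move: hh1 hh2 hh3; rewrite !tlt vx vz => hh1 hh2 hh3; apply: gxz.2; by exists b0, b1; split => //; split.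
have [r1 [r2 [r3 [q1 q2 q3 q4 q5]]]] := triB H1 H2 H3 N1 N2 N3.
apply: HL; exists r1, r2, r3; split.
- move=> i hi; have [] := @tset_mem x y z i xm ym zm hi => ->; assumption.
- by move=> i /memset2 [] ->.
Qed.

End Main3.


Section Cross.
Variables (R : realType) (n : nat) (t : 'I_n -> R).

Lemma lift2 (u0 u1 : 'I_n) (al : R) : u0 != u1 -> 0 <= al -> al <= 1 ->
  Defs.lift t [set u0; u1]
    ((1 - al) * t u0 + al * t u1, (1 - al) * t u0 ^+ 2 + al * t u1 ^+ 2)
    ((1 - al) * t u0 ^+ 3 + al * t u1 ^+ 3).
Proof.
move=> u01 a0 a1.
pose lam i := if i == u0 then 1 - al else if i == u1 then al else 0.
have S : forall g : 'I_n -> R, \sum_i lam i * g i = (1 - al) * g u0 + al * g u1.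
  move=> g; rewrite (@sum_supp2 _ _ (fun i => lam i * g i) u0 u1) //.
    by rewrite /lam eqxx eq_sym (negbTE u01) eqxx.
  by move=> i iu iv; rewrite /lam (negbTE iu) (negbTE iv) mul0r.
exists lam; split.
- move=> i; rewrite /lam; case: ifP => _; first lra; case: ifP => _ //.
- by move=> i; rewrite !inE negb_or => /andP [iu iv]; rewrite /lam (negbTE iu) (negbTE iv).
- transitivity (\sum_i lam i * 1); first by apply: eq_bigr => i _; rewrite mulr1.
  have h := S (fun _ => 1); simpl in h; rewrite h; ring.
- by rewrite !S.
- by rewrite S.
Qed.

Lemma crossing (A0 A1 B0 B1 : 'I_n) : t A0 < t B0 -> t B0 < t A1 -> t A1 < t B1 ->
  exists p za zb, [/\ Defs.lift t [set A0; A1] p za, Defs.lift t [set B0; B1] p zb & za < zb].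
Proof.
set a0 := t A0; set a1 := t A1; set b0 := t B0; set b1 := t B1.
move=> h1 h2 h3.
pose D := a0 + a1 - b0 - b1.
have D0 : D < 0 by rewrite /D; lra.
have Dn : D != 0 by rewrite lt_eqF.
pose X := (a0 * a1 - b0 * b1) / D.
have XB0 : X - b0 = ((b0 - a0) * (a1 - b0)) / (- D) by rewrite /X /D; field; lra.
have A1X : a1 - X = ((a1 - b0) * (b1 - a1)) / (- D) by rewrite /X /D; field; lra.
have pos1 : 0 < X - b0.
  rewrite XB0; apply: divr_gt0; [apply: mulr_gt0|]; lra.
have pos2 : 0 < a1 - X.
  rewrite A1X; apply: divr_gt0; [apply: mulr_gt0|]; lra.
pose al := (X - a0) / (a1 - a0).
pose be := (X - b0) / (b1 - b0).
have al0 : 0 < al by apply: divr_gt0; lra.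
have al1 : al <= 1 by rewrite /al ler_pdivrMr; lra.
have be0 : 0 <= be by apply: divr_ge0; lra.
have be1 : be <= 1 by rewrite /be ler_pdivrMr; lra.
have A01 : A0 != A1 by apply/eqP => e; move: h1 h2; rewrite /a0 /a1 e; lra.
have B01 : B0 != B1 by apply/eqP => e; move: h2 h3; rewrite /b0 /b1 e; lra.
have a10 : a1 - a0 != 0 by rewrite subr_eq0; apply/eqP; lra.
have b10 : b1 - b0 != 0 by rewrite subr_eq0; apply/eqP; lra.
have LA := lift2 A01 (ltW al0) al1.
have LB := lift2 B01 be0 be1.
exists ((1 - al) * a0 + al * a1, (1 - al) * a0 ^+ 2 + al * a1 ^+ 2).
exists ((1 - al) * a0 ^+ 3 + al * a1 ^+ 3), ((1 - be) * b0 ^+ 3 + be * b1 ^+ 3).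
split => //.
- have -> : ((1 - al) * a0 + al * a1, (1 - al) * a0 ^+ 2 + al * a1 ^+ 2) =
     ((1 - be) * b0 + be * b1, (1 - be) * b0 ^+ 2 + be * b1 ^+ 2); last exact: LB.
  congr (_, _); rewrite /al /be /X /D; field; lra.
- have E : ((1 - be) * b0 ^+ 3 + be * b1 ^+ 3) - ((1 - al) * a0 ^+ 3 + al * a1 ^+ 3)
      = al * (a1 - b0) * (b1 - a1) * (a1 - a0).
    rewrite /al /be /X /D; field; lra.
  have : 0 < al * (a1 - b0) * (b1 - a1) * (a1 - a0).
    apply: mulr_gt0; [apply: mulr_gt0; [apply: mulr_gt0|]|]; lra.
  lra.
Qed.

End Cross.

Unset Implicit Arguments.

Lemma card_tset m x y z : (x < y)%N -> (y < z)%N -> (z <= m)%N -> #|tset m x y z| = 3%N.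
Proof.
move=> xy yz zm.
have xm : (x < m.+1)%N by lia.
have ym : (y < m.+1)%N by lia.
have zm' : (z < m.+1)%N by lia.
have -> : tset m x y z = (inord x : 'I_m.+1) |: [set inord y; inord z].
  apply/setP => i; rewrite !inE -!val_eqE /= !inordK //.
rewrite cardsU1 cards2 !inE -!val_eqE /= !inordK //.
have -> : (y == z) = false by apply/negbTE; rewrite neq_ltn yz.
have -> : (x == y) = false by apply/negbTE; rewrite neq_ltn xy.
have -> : (x == z) = false by apply/negbTE; rewrite neq_ltn (ltn_trans xy yz).
by [].
Qed.

Lemma edec n (e : {set 'I_n}) : is_edge e -> exists a0 a1 : 'I_n, (a0 < a1)%N /\ e = [set a0; a1].
Proof.
rewrite /is_edge => /eqP /cards2P [x [y [xy ->]]].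
case: (ltngtP x y) => h.
- by exists x, y.
- by exists y, x; rewrite setUC.
- by move: xy; rewrite -val_eqE /= h eqxx.
Qed.

Theorem corollary3p5 (R : realType) (n : nat) (t : 'I_n -> R)
    (E1 E2 E3 : {set {set 'I_n}}) :
  (3 <= n)%N ->
  (forall i j : 'I_n, (i < j)%N -> t i < t j) ->
  (forall e, e \in E1 :|: E2 :|: E3 -> is_edge e) ->
  [disjoint E1 & E2] -> [disjoint E1 & E3] -> [disjoint E2 & E3] ->
  (exists s : seq {set 'I_n},
     [/\ uniq s, s =i E1 :|: E2 :|: E3,
         (forall i j, (i < j < size s)%N ->
            ~ (nth set0 s j \in E1 /\ nth set0 s i \in E2 :|: E3) /\
            ~ (nth set0 s j \in E2 /\ nth set0 s i \in E3))
       & (forall i j, (i < j < size s)%N ->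
            lt3 t (nth set0 s i) (nth set0 s j) \/
            ~ cross t (nth set0 s i) (nth set0 s j))]) ->
  (forall e f, e \in E2 -> f \in E2 -> e != f -> ~ cross t e f) ->
  exists T : {set {set 'I_n}},
    [/\ triangulation t T,
        (forall e, e \in E1 -> edge_le_T t e T),
        (forall e, e \in E2 -> edge_in_T e T)
      & (forall e, e \in E3 -> T_le_edge t T e)].
Proof.
case: n t E1 E2 E3 => [|m] t E1 E2 E3 n3 //.
move=> tmono hedge d12 d13 d23 [s [us sE hord hlt]] hE2.
have m2 : (2 <= m)%N by [].
pose A := E1 :|: E2; pose B := E2 :|: E3.
have CC : forall a0 a1 b0 b1 : 'I_m.+1, [set a0; a1] \in A -> [set b0; b1] \in B ->
    ~ [/\ (b0 < a0)%N, (a0 < b1)%N & (b1 < a1)%N].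
  move=> a0 a1 b0 b1 aA bB [o1 o2 o3].
  have [p [zb [za [Lb La zlt]]]] := @crossing R m.+1 t b0 b1 a0 a1
    ltac:(by rewrite (tlt tmono)) ltac:(by rewrite (tlt tmono)) ltac:(by rewrite (tlt tmono)).
  set a := [set a0; a1] in aA La *; set b := [set b0; b1] in bB Lb *.
  have disj : forall i, i \in a -> i \in b -> False.
    move=> i /memset2 [] -> /memset2 [] /(congr1 val) /= e; lia.
  have crab : cross t a b.
    exists p; split; [by exists za|by exists zb|].
    by move=> [i [iab _]]; move: iab; rewrite inE => /andP [/disj h /h].
  have nh : ~ height_le t a b by move=> h; have := h p za zb La Lb; lra.
  have ab : a != b by apply/eqP => e; apply: (disj a0); rewrite -?e !inE eqxx.
  have as_ : a \in s by rewrite sE /A !inE; move: aA; rewrite !inE => /orP [] ->; rewrite ?orbT.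
  have bs : b \in s by rewrite sE /B !inE; move: bB; rewrite !inE => /orP [] ->; rewrite ?orbT.
  have ord : (exists i j, (i < j < size s)%N /\ nth set0 s i = b /\ nth set0 s j = a) \/
             (exists i j, (i < j < size s)%N /\ nth set0 s i = a /\ nth set0 s j = b).
    have ia := index_mem a s; have ib := index_mem b s.
    rewrite as_ in ia; rewrite bs in ib.
    case: (ltngtP (index a s) (index b s)) => h.
    - by right; exists (index a s), (index b s); rewrite !nth_index // h ib.
    - by left; exists (index b s), (index a s); rewrite !nth_index // h ia.
    - by move: ab; rewrite -(nth_index set0 as_) h nth_index // eqxx.
  have after : ~ (exists i j, (i < j < size s)%N /\ nth set0 s i = a /\ nth set0 s j = b).
    move=> [i [j [hij [ei ej]]]]; case: (hlt i j hij); rewrite ei ej.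
      by move=> [_ ].
    by [].
  case/setUP: aA => [aE1|aE2].
  - case: ord => [[i [j [hij [ei ej]]]]|//].
    by have [h1 _] := hord i j hij; apply: h1; rewrite ei ej.
  - case/setUP: bB => [bE2|bE3]; first exact: (hE2 a b aE2 bE2 ab crab).
    case: ord => [[i [j [hij [ei ej]]]]|//].
    by have [_ h2] := hord i j hij; apply: h2; rewrite ei ej.
have g0 : good A B 0 m.
  split.
  - by move=> [a0 [a1 [_ [_ _ h]]]]; move: (ltn_ord a1); rewrite ltnS leqNgt h.
  - by move=> [b0 [b1 [_ [h _ _]]]].
have hf : (m - 0 <= m.+1)%N by rewrite subn0.
have m0 : (0 < m)%N by apply: leq_trans m2.
have m1 : (0.+1 < m)%N by [].
set T := tri B m.+1 0 m.
have topT : tset m 0 (apex B 0 m) m \in T by rewrite /T /= m1 !inE eqxx.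
have cells := tri_cells CC hf g0.
exists T; split.
- split.
  + move=> r rT; have [x [y [z [/andP [_ xy] /andP [yz zm] -> _]]]] := cells r rT.
    exact: card_tset.
  + move=> p; split.
    * move=> hp; have hp' : in_conv t (iv m 0 m) p.
        by apply: in_conv_sub hp; apply/subsetP => i _; rewrite inE /= -ltnS ltn_ord.
      case: (tri_cover tmono CC hf m0 (leqnn m) g0 hp') => [[r r1 r2]|hr]; first by exists r.
      exists (tset m 0 (apex B 0 m) m) => //; apply: in_conv_sub hr.
      by apply/subsetP => i /in_tset [] e; rewrite inE e eqxx ?orbT.
    * by move=> [r _ hr]; apply: in_conv_sub hr; apply: subsetT.
  + move=> r s0 rT sT p; split.
    * by move=> [h1 h2]; apply: (tri_inter tmono CC hf m0 (leqnn m) g0 rT sT).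
    * by move=> h; split; apply: in_conv_sub h; [apply: subsetIl|apply: subsetIr].
- move=> e eE1 r rT.
  have [a0 [a1 [a01 ee]]] := @edec _ e (hedge e ltac:(by rewrite !inE eE1)).
  have [x [y [z [/andP [_ xy] /andP [yz zm] -> [gxy gyz gxz]]]]] := cells r rT.
  rewrite ee; apply: (tri_hlA tmono xy yz zm gxy gyz gxz _ a01).
  by rewrite -ee /A inE eE1.
- move=> e eE2.
  have [a0 [a1 [a01 ee]]] := @edec _ e (hedge e ltac:(by rewrite !inE eE2 orbT)).
  have eA : [set a0; a1] \in A by rewrite -ee /A inE eE2 orbT.
  have eB : [set a0; a1] \in B by rewrite -ee /B inE eE2.
  case: (tri_edge CC hf m0 (leqnn m) g0 eA eB (leq0n _) a01 (leq_trans (ltn_ord a1) (leqnn _)))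
    => [[e0 e1]|[r r1 r2]].
    exists (tset m 0 (apex B 0 m) m) => //; rewrite ee; apply: sub_tset; apply/or3P.
      by apply: Or31; apply/eqP.
    by apply: Or33; apply/eqP.
  by exists r => //; rewrite ee.
- move=> e eE3 r rT.
  have [b0 [b1 [b01 ee]]] := @edec _ e (hedge e ltac:(by rewrite !inE eE3 !orbT)).
  have [x [y [z [/andP [_ xy] /andP [yz zm] -> [gxy gyz gxz]]]]] := cells r rT.
  rewrite ee; apply: (tri_hlB tmono xy yz zm gxy gyz gxz _ b01).
  by rewrite -ee /B inE eE3 orbT.
Qed.
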